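(* Let $n,m,k_1,\ldots,k_r\ge 0$ be integers and let $u_1,\ldots,u_r\in F$ be evaluations at $(C_1,C_2)$ of left normed commutators of the form $[t_1,t_2,t_{j_3},\ldots,t_{j_l}]$ ($j_s\in\{1,2\}$, degree $l\ge 2$). Let $f=C_1^nC_2^mu_1^{k_1}\cdots u_r^{k_r}\in F$. Then $f$ is central in $F$ if and only if $k_1+\cdots+k_r\ge 2$, or else $m=n=k_1=\cdots=k_r=0$.
   Context: $K$ is an infinite field of characteristic different from 2. Let $X=\{x_1,x_2,x_1',x_2'\}$ and $Y=\{y_1,y_2,y_1',y_2'\}$, and let $K[X;Y]\cong K[X]\otimes_K E(Y)$ be the free supercommutative algebra: the $x$'s are even commuting variables, the $y$'s are odd pairwise anticommuting variables, and $E(Y)$ is the Grassmann algebra on the vector space with basis $Y$. Put $C_1=\begin{pmatrix} x_1&y_1\\ y_1'&x_1'\end{pmatrix}$, $C_2=\begin{pmatrix} x_2&y_2\\ y_2'&x_2'\end{pmatrix}$, and let $F=K[C_1,C_2]$ be the unital $K$-subalgebra of $M_2(K[X;Y])$ generated by $C_1,C_2$. Commutators are $[a,b]=ab-ba$, left normed: $[a_1,\ldots,a_k]=[[a_1,\ldots,a_{k-1}],a_k]$; $t_1,t_2$ are free noncommuting variables. *)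

(* Defs.v *)
From HB Require Import structures.
From mathcomp Require Import all_boot all_order all_algebra.
From mathcomp Require Import mpoly.
Set Implicit Arguments. Unset Strict Implicit. Unset Printing Implicit Defensive.
Import GRing.Theory.
Local Open Scope ring_scope.

(* Even part: the polynomial ring K[X] = K[x1,x2,x1',x2'], variables
   'X_0 = x1, 'X_1 = x2, 'X_2 = x1', 'X_3 = x2'.                          *)
Definition KX (K : fieldType) := {mpoly K[4]}.

(* The free supercommutative algebra K[X;Y] = K[X] (x) E(Y), with
   Y = {y1,y2,y1',y2'} (indices 0,1,2,3), is realized faithfully through
   its left regular representation on itself: K[X;Y] is a free K[X]-module
   with basis e_S (S subset of {0,1,2,3}, encoded by the bits of a : 'I_16),
   and every element acts by left multiplication.  This gives an injective
   K-algebra morphism K[X;Y] -> SA K := 16x16 matrices over K[X].          *)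
Definition SA (K : fieldType) := 'M[KX K]_16.

Definition bitI (a : nat) (i : nat) : bool := odd (a %/ 2 ^ i).

(* left multiplication by the odd generator y_i:
   y_i * e_S = (-1)^#{j in S | j < i} e_(S u {i}) if i \notin S, else 0 *)
Definition yv (K : fieldType) (i : 'I_4) : SA K :=
  \matrix_(a < 16, b < 16)
    (if (~~ bitI b i) && (a == b + 2 ^ i :> nat)
     then (-1) ^+ (count (fun j => bitI b j) (iota 0 i)) else 0).

Definition xv (K : fieldType) (i : 'I_4) : SA K := ('X_i : KX K)%:M.

Definition scal (K : fieldType) (c : K) : 'M[SA K]_2 :=
  ((c%:MP : KX K)%:M : SA K)%:M.

(* C_1 = [[x1, y1], [y1', x1']]  (j = false),
   C_2 = [[x2, y2], [y2', x2']]  (j = true)                                *)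
Definition Cgen (K : fieldType) (j : bool) : 'M[SA K]_2 :=
  let o := if j then 1%N else 0%N in
  \matrix_(p < 2, q < 2)
    (if (p == 0 :> nat) && (q == 0 :> nat) then xv K (inord o)
     else if (p == 0 :> nat) then yv K (inord o)
     else if (q == 0 :> nat) then yv K (inord (o + 2))
     else xv K (inord (o + 2))).

Definition C1 (K : fieldType) := Cgen K false.
Definition C2 (K : fieldType) := Cgen K true.

Definition comm (R : ringType) (a b : R) := a * b - b * a.

Definition inF (K : fieldType) (g : 'M[SA K]_2) : Prop :=
  exists s : seq (K * seq bool),
    g = \sum_(p <- s) scal p.1 * \prod_(b <- p.2) Cgen K b.

Definition centralF (K : fieldType) (f : 'M[SA K]_2) : Prop :=
  forall g, inF g -> f * g = g * f.

(* evaluation at (C1,C2) of the left normed commutator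
   [t1, t2, t_{j3}, ..., t_{jl}]   with js = [j3; ...; jl]
   (false encodes index 1, true encodes index 2). *)
Definition lcomm (K : fieldType) (js : seq bool) : 'M[SA K]_2 :=
  foldl (fun a b => comm a (Cgen K b)) (comm (C1 K) (C2 K)) js.

(* Main.v *)
Require Import Defs.
From HB Require Import structures.
From mathcomp Require Import all_boot all_order all_algebra.
From mathcomp Require Import mpoly.
From mathcomp Require Import ring zify.
Set Implicit Arguments. Unset Strict Implicit. Unset Printing Implicit Defensive.
Import GRing.Theory.
Local Open Scope ring_scope.

Definition idx := (bool * bool * bool * bool)%type.
Definition allidx : list idx :=
 [:: (false,false,false,false); (true,false,false,false); (false,true,false,false); (true,true,false,false);
     (false,false,true,false); (true,false,true,false); (false,true,true,false); (true,true,true,false);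
     (false,false,false,true); (true,false,false,true); (false,true,false,true); (true,true,false,true);
     (false,false,true,true); (true,false,true,true); (false,true,true,true); (true,true,true,true)].
Definition isub (d a : idx) : bool :=
  let '(d0,d1,d2,d3) := d in let '(a0,a1,a2,a3) := a in
  implb d0 a0 && implb d1 a1 && implb d2 a2 && implb d3 a3.
Definition idif (a d : idx) : idx :=
  let '(d0,d1,d2,d3) := d in let '(a0,a1,a2,a3) := a in
  (a0 && ~~ d0, a1 && ~~ d1, a2 && ~~ d2, a3 && ~~ d3).
Definition isgn (d e : idx) : bool :=
  let '(d0,d1,d2,d3) := d in let '(e0,e1,e2,e3) := e in
  xorb (d1 && e0) (xorb (d2 && e0) (xorb (d2 && e1) (xorb (d3 && e0) (xorb (d3 && e1) (d3 && e2))))).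
Definition ieq (a b : idx) : bool :=
  let '(a0,a1,a2,a3) := a in let '(b0,b1,b2,b3) := b in
  Bool.eqb a0 b0 && Bool.eqb a1 b1 && Bool.eqb a2 b2 && Bool.eqb a3 b3.
Definition toidx (a : nat) : idx := (odd a, odd a./2, odd a./2./2, odd a./2./2./2).

Section G.
Variable R : comNzRingType.
Definition GG := idx -> R.
Definition gsum (f : idx -> R) : R := foldr (fun x acc => f x + acc) 0 allidx.
Definition gterm (u v : GG) (a d : idx) : R :=
  if isub d a then (if isgn d (idif a d) then - (u d * v (idif a d)) else u d * v (idif a d)) else 0.
Definition gmul (u v : GG) : GG := fun a => gsum (gterm u v a).
Definition gent (u : GG) (A B : idx) : R :=
  if isub B A then (if isgn (idif A B) B then - u (idif A B) else u (idif A B)) else 0.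
Definition Phi (u : GG) : 'M[R]_16 := \matrix_(a < 16, b < 16) gent u (toidx a) (toidx b).

Lemma sum_toidx (F : idx -> R) : \sum_(c < 16) F (toidx c) = gsum F.
Proof. by rewrite !big_ord_recl big_ord0 /gsum /= addr0. Qed.

Lemma gent_mul (u v : GG) A B :
  gsum (fun C => gent u A C * gent v C B) = gent (gmul u v) A B.
Proof.
case: A => [[[[] []] []] []]; case: B => [[[[] []] []] []];
lazy beta iota zeta delta [gsum gent gmul gterm allidx isub idif isgn foldr implb andb negb xorb]; ring.
Qed.

Lemma PhiM (u v : GG) : Phi u * Phi v = Phi (gmul u v).
Proof.
apply/matrixP => a b; rewrite [LHS]mxE [RHS]mxE.
under eq_bigr do rewrite !mxE.
by rewrite (sum_toidx (fun C => gent u (toidx a) C * gent v C (toidx b))) gent_mul.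
Qed.

Lemma Phi_ext (u v : GG) : (forall x, u x = v x) -> Phi u = Phi v.
Proof. by move=> H; apply/matrixP => a b; rewrite !mxE /gent H. Qed.

Lemma PhiD (u v : GG) : Phi u + Phi v = Phi (fun x => u x + v x).
Proof.
apply/matrixP => a b; rewrite !mxE /gent.
by case: ifP => _; [case: ifP => _; [rewrite opprD|] | rewrite addr0].
Qed.

Lemma PhiZ (c : R) (u : GG) : c%:M * Phi u = Phi (fun x => c * u x).
Proof.
rewrite -mulmxE mul_scalar_mx; apply/matrixP => a b; rewrite !mxE /gent.
by case: ifP => _; [case: ifP => _; [rewrite mulrN|] | rewrite mulr0].
Qed.

Definition inat (x : idx) : nat :=
  let '(a0,a1,a2,a3) := x in (a0 + 2 * a1 + 4 * a2 + 8 * a3)%N.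
Lemma inat_lt x : (inat x < 16)%N.
Proof. by case: x => [[[[] []] []] []]. Qed.
Lemma toidx_inat x : toidx (inat x) = x.
Proof. by case: x => [[[[] []] []] []]. Qed.

Lemma Phi_inj (u v : GG) : Phi u = Phi v -> forall x, u x = v x.
Proof.
move=> /matrixP H x.
move: (H (Ordinal (inat_lt x)) ord0); rewrite !mxE /= toidx_inat /gent.
by case: x {H} => [[[[] []] []] []].
Qed.

Definition OG := idx -> option R.
Definition val (o : option R) : R := if o is Some x then x else 0.
Definition oadd (a b : option R) : option R :=
  match a, b with None, _ => b | Some x, None => Some x | Some x, Some y => Some (x + y) end.
Definition omul (a b : option R) : option R :=
  match a, b with Some x, Some y => Some (x * y) | _, _ => None end.
Definition oneg (a : option R) : option R := if a is Some x then Some (- x) else None.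
Definition osg (s : bool) (a : option R) := if s then oneg a else a.
Definition ogmul (u v : OG) : OG := fun a =>
  foldr (fun d acc => oadd (if isub d a then osg (isgn d (idif a d)) (omul (u d) (v (idif a d))) else None) acc)
        None allidx.
Definition vl (u : OG) : GG := fun a => val (u a).

Lemma val_oadd a b : val (oadd a b) = val a + val b.
Proof. by case: a; case: b => //= *; rewrite ?add0r ?addr0. Qed.
Lemma val_omul a b : val (omul a b) = val a * val b.
Proof. by case: a; case: b => //= *; rewrite ?mul0r ?mulr0. Qed.
Lemma val_osg s a : val (osg s a) = if s then - val a else val a.
Proof. by case: s; case: a => //= *; rewrite oppr0. Qed.

Lemma ogmulE (u v : OG) a : val (ogmul u v a) = gmul (vl u) (vl v) a.
Proof.
rewrite /ogmul /gmul /gsum /gterm /vl; elim: allidx => //= d l IH.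
by rewrite val_oadd IH; case: ifP => _ //=; rewrite ?val_osg ?val_omul ?add0r.
Qed.

Record quad := Quad { q00 : OG; q01 : OG; q10 : OG; q11 : OG }.
Definition qsel (A : quad) (i j : nat) : OG :=
  match i, j with 0, 0 => q00 A | 0, _ => q01 A | _, 0 => q10 A | _, _ => q11 A end.
Definition Psi (A : quad) : 'M['M[R]_16]_2 := \matrix_(i < 2, j < 2) Phi (vl (qsel A i j)).

Definition oqmul (A B : quad) : quad :=
  Quad (fun a => oadd (ogmul (q00 A) (q00 B) a) (ogmul (q01 A) (q10 B) a))
       (fun a => oadd (ogmul (q00 A) (q01 B) a) (ogmul (q01 A) (q11 B) a))
       (fun a => oadd (ogmul (q10 A) (q00 B) a) (ogmul (q11 A) (q10 B) a))
       (fun a => oadd (ogmul (q10 A) (q01 B) a) (ogmul (q11 A) (q11 B) a)).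
Definition oqadd (A B : quad) : quad :=
  Quad (fun a => oadd (q00 A a) (q00 B a)) (fun a => oadd (q01 A a) (q01 B a))
       (fun a => oadd (q10 A a) (q10 B a)) (fun a => oadd (q11 A a) (q11 B a)).
Definition oqopp (A : quad) : quad :=
  Quad (fun a => oneg (q00 A a)) (fun a => oneg (q01 A a)) (fun a => oneg (q10 A a)) (fun a => oneg (q11 A a)).
Definition oqcomm (A B : quad) := oqadd (oqmul A B) (oqopp (oqmul B A)).
Definition oqscal (c : R) (A : quad) : quad :=
  Quad (fun a => omul (Some c) (q00 A a)) (fun a => omul (Some c) (q01 A a))
       (fun a => omul (Some c) (q10 A a)) (fun a => omul (Some c) (q11 A a)).

Lemma PhiMo (u v : OG) : Phi (vl u) * Phi (vl v) = Phi (vl (ogmul u v)).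
Proof. by rewrite PhiM; apply: Phi_ext => x; rewrite /vl ogmulE. Qed.
Lemma PhiDo (u v : OG) : Phi (vl u) + Phi (vl v) = Phi (vl (fun a => oadd (u a) (v a))).
Proof. by rewrite PhiD; apply: Phi_ext => x; rewrite /vl val_oadd. Qed.
Lemma PhiNo (u : OG) : - Phi (vl u) = Phi (vl (fun a => oneg (u a))).
Proof.
apply/matrixP => a b; rewrite !mxE /gent /vl.
by case: ifP => _; [case: ifP => _; case: (u _) => //= *; rewrite ?opprK ?oppr0|rewrite oppr0].
Qed.

Lemma PsiM (A B : quad) : Psi A * Psi B = Psi (oqmul A B).
Proof.
apply/matrixP => i j; rewrite !mxE !big_ord_recl big_ord0 addr0 !mxE /=.
by case: i j => [[|[|i]] Hi] [[|[|j]] Hj] //=; rewrite !PhiMo PhiDo.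
Qed.
Lemma PsiD (A B : quad) : Psi A + Psi B = Psi (oqadd A B).
Proof.
apply/matrixP => i j; rewrite !mxE.
by case: i j => [[|[|i]] Hi] [[|[|j]] Hj] //=; rewrite !PhiDo.
Qed.
Lemma PsiN (A : quad) : - Psi A = Psi (oqopp A).
Proof.
apply/matrixP => i j; rewrite !mxE.
by case: i j => [[|[|i]] Hi] [[|[|j]] Hj] //=; rewrite !PhiNo.
Qed.
Lemma PsiC (A B : quad) : Psi A * Psi B - Psi B * Psi A = Psi (oqcomm A B).
Proof. by rewrite !PsiM PsiN PsiD. Qed.

Definition sc (c : R) : 'M['M[R]_16]_2 := (c%:M)%:M.
Lemma PsiZ (c : R) (A : quad) : sc c * Psi A = Psi (oqscal c A).
Proof.
rewrite /sc -mulmxE mul_scalar_mx; apply/matrixP => i j; rewrite !mxE.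
case: i j => [[|[|i]] Hi] [[|[|j]] Hj] //=; rewrite PhiZ; apply: Phi_ext => x;
  by rewrite /vl /=; case: (_ A x) => [y|] /=; rewrite ?mulr0.
Qed.

Lemma sc_comm (c : R) (X : 'M['M[R]_16]_2) : sc c * X = X * sc c.
Proof.
rewrite /sc -!mulmxE mul_scalar_mx; apply/matrixP => i j; rewrite !mxE.
rewrite (bigD1 j) //= big1 ?addr0; last by move=> k /negbTE nkj; rewrite !mxE nkj mulr0n mulr0.
by rewrite !mxE eqxx mulr1n -mulmxE scalar_mxC.
Qed.
Lemma sc_mul (c d : R) : sc c * sc d = sc (c * d).
Proof. rewrite /sc -mulmxE -scalar_mxM; congr (_%:M); by rewrite -mulmxE -scalar_mxM. Qed.

Definition oqeqv (A B : quad) : Prop :=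
  foldr (fun a P => (val (q00 A a) = val (q00 B a) /\ val (q01 A a) = val (q01 B a) /\
      val (q10 A a) = val (q10 B a) /\ val (q11 A a) = val (q11 B a)) /\ P) True allidx.

Lemma oqeqv_Psi A B : oqeqv A B -> Psi A = Psi B.
Proof.
have key : forall P : idx -> Prop, foldr (fun a Q => P a /\ Q) True allidx -> forall x, P x.
  move=> P H [[[[] []] []] []]; move: H => /=; tauto.
move=> H; have K := key (fun a => val (q00 A a) = val (q00 B a) /\ val (q01 A a) = val (q01 B a) /\
      val (q10 A a) = val (q10 B a) /\ val (q11 A a) = val (q11 B a)) H.
apply/matrixP => i j; rewrite !mxE.
case: i j => [[|[|i]] Hi] [[|[|j]] Hj] //=; apply: Phi_ext => x; rewrite /vl; case: (K x) => //; tauto.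
Qed.
End G.

Lemma Psi0 (R : comNzRingType) : Psi (Quad (fun _ => None) (fun _ => None) (fun _ => None) (fun _ => None) : quad R) = 0.
Proof.
apply/matrixP => i j; rewrite !mxE.
have P0 : Phi (vl (fun _ : idx => None : option R)) = 0.
  by apply/matrixP => a b; rewrite !mxE /gent /vl /= oppr0 !if_same.
by case: i j => [[|[|i]] Hi] [[|[|j]] Hj] //=; rewrite P0 ?mxE.
Qed.
Lemma dummyX : True. Proof. by [].
Qed.

Lemma Psi_inj01 (R : comNzRingType) (A B : quad R) : Psi A = Psi B -> forall x, val (q01 A x) = val (q01 B x).
Proof.
move=> /matrixP /(_ ord0 (lift ord0 ord0)); rewrite !mxE /= => /Phi_inj H x.
exact: H x.
Qed.


Definition oT (R : comNzRingType) (v0 v1 v2 v3 v4 v5 v6 v7 v8 v9 v10 v11 v12 v13 v14 v15 : option R) : OG R :=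
  fun a => let '(a0,a1,a2,a3) := a in
  if a3 then (if a2 then (if a1 then (if a0 then v15 else v14) else (if a0 then v13 else v12))
                    else (if a1 then (if a0 then v11 else v10) else (if a0 then v9 else v8)))
        else (if a2 then (if a1 then (if a0 then v7 else v6) else (if a0 then v5 else v4))
                    else (if a1 then (if a0 then v3 else v2) else (if a0 then v1 else v0))).
Arguments oT {R}.
Definition oC (R : comNzRingType) (c : R) : OG R := fun a => if ieq a (false,false,false,false) then Some c else None.
Definition oY (R : comNzRingType) (y : idx) : OG R := fun a => if ieq a y then Some 1 else None.
Definition qzero (R : comNzRingType) : quad R := Quad (fun _ => None) (fun _ => None) (fun _ => None) (fun _ => None).

Section Checks.
Variable R : comNzRingType.
Variables x1 x2 x1p x2p : R.
Definition cq (b : bool) : quad R :=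
  if b then Quad (oC x2) (oY R (false,true,false,false)) (oY R (false,false,false,true)) (oC x2p)
  else Quad (oC x1) (oY R (true,false,false,false)) (oY R (false,false,true,false)) (oC x1p).
Definition dl (j : bool) : R := if j then x2 - x2p else x1 - x1p.
Definition Bq (t : option (bool * bool)) : quad R :=
  match t with
  | None => (Quad (oT None None None None None None (Some (- (1%:R))) None None (Some ((1%:R))) None None None None None None) (oT None (Some ((x2p) - (x2))) (Some (- (x1p) + (x1))) None None None None None None None None None None None None None) (oT None None None None (Some (- (x2p) + (x2))) None None None (Some ((x1p) - (x1))) None None None None None None None) (oT None None None None None None (Some (- (1%:R))) None None (Some ((1%:R))) None None None None None None))
  | Some (false, false) => (Quad (oT None None None None None (Some ((2%:R * x2p) - (2%:R * x2))) (Some (- (x1p) + (x1))) None None (Some (- (x1p) + (x1))) None None None None None None) (oT None (Some ((x1p * x2p) - (x2 * x1p) - (x1 * x2p) + (x1 * x2))) (Some (- (x1p * x1p) + (2%:R * x1 * x1p) - (x1 * x1))) None None None None None None None None None None None None None) (oT None None None None (Some ((x1p * x2p) - (x2 * x1p) - (x1 * x2p) + (x1 * x2))) None None None (Some (- (x1p * x1p) + (2%:R * x1 * x1p) - (x1 * x1))) None None None None None None None) (oT None None None None None (Some ((2%:R * x2p) - (2%:R * x2))) (Some (- (x1p) + (x1))) None None (Some (- (x1p) + (x1))) None None None None None None))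
  | Some (false, true) => (Quad (oT None None None None None None (Some ((x2p) - (x2))) None None (Some ((x2p) - (x2))) (Some (- (2%:R * x1p) + (2%:R * x1))) None None None None None) (oT None (Some ((x2p * x2p) - (2%:R * x2 * x2p) + (x2 * x2))) (Some (- (x1p * x2p) + (x2 * x1p) + (x1 * x2p) - (x1 * x2))) None None None None None None None None None None None None None) (oT None None None None (Some ((x2p * x2p) - (2%:R * x2 * x2p) + (x2 * x2))) None None None (Some (- (x1p * x2p) + (x2 * x1p) + (x1 * x2p) - (x1 * x2))) None None None None None None None) (oT None None None None None None (Some ((x2p) - (x2))) None None (Some ((x2p) - (x2))) (Some (- (2%:R * x1p) + (2%:R * x1))) None None None None None))
  | Some (true, false) => (Quad (oT None None None None None None (Some ((x1p) - (x1))) None None (Some (- (x1p) + (x1))) None None None None None None) (oT None (Some (- (x1p * x2p) + (x2 * x1p) + (x1 * x2p) - (x1 * x2))) (Some ((x1p * x1p) - (2%:R * x1 * x1p) + (x1 * x1))) None None None None None None None None None None None None None) (oT None None None None (Some ((x1p * x2p) - (x2 * x1p) - (x1 * x2p) + (x1 * x2))) None None None (Some (- (x1p * x1p) + (2%:R * x1 * x1p) - (x1 * x1))) None None None None None None None) (oT None None None None None None (Some ((x1p) - (x1))) None None (Some (- (x1p) + (x1))) None None None None None None))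
  | Some (true, true) => (Quad (oT None None None None None None (Some ((x2p) - (x2))) None None (Some (- (x2p) + (x2))) None None None None None None) (oT None (Some (- (x2p * x2p) + (2%:R * x2 * x2p) - (x2 * x2))) (Some ((x1p * x2p) - (x2 * x1p) - (x1 * x2p) + (x1 * x2))) None None None None None None None None None None None None None) (oT None None None None (Some ((x2p * x2p) - (2%:R * x2 * x2p) + (x2 * x2))) None None None (Some (- (x1p * x2p) + (x2 * x1p) + (x1 * x2p) - (x1 * x2))) None None None None None None None) (oT None None None None None None (Some ((x2p) - (x2))) None None (Some (- (x2p) + (x2))) None None None None None None))
  end.

Ltac qcompute := lazy beta iota zeta delta [oT oC oY qzero cq dl Bq oqeqv oqcomm oqadd oqopp oqmul oqscal
  q00 q01 q10 q11 ogmul oadd omul oneg osg val allidx isub idif isgn ieq foldr implb andb negb xorb Bool.eqb];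
  repeat split; try reflexivity; ring.

Lemma chk1 : oqeqv (oqcomm (cq false) (cq true)) (Bq None).
Proof. Time qcompute. Qed.
Lemma chk2 k : oqeqv (oqcomm (Bq None) (cq k)) (Bq (Some (false,k))).
Proof. Time (case: k; qcompute). Qed.
Lemma chk3 e j k : oqeqv (oqcomm (Bq (Some (e,j))) (cq k)) (oqscal (dl j) (Bq (Some (~~e,k)))).
Proof. Time (case: e; case: j; case: k; qcompute). Qed.
Lemma chk4 t t' k : oqeqv (oqcomm (oqmul (Bq t) (Bq t')) (cq k)) (qzero R).
Proof. Time (case: t => [[[] []]|]; case: t' => [[[] []]|]; case: k; qcompute). Qed.
Lemma chk5 t t' t'' : oqeqv (oqmul (oqmul (Bq t) (Bq t')) (Bq t'')) (qzero R).
Proof. Time (case: t => [[[] []]|]; case: t' => [[[] []]|]; case: t'' => [[[] []]|]; qcompute). Qed.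
End Checks.

Definition yidx (i : nat) : idx := (i == 0, i == 1, i == 2, i == 3)%N.

Definition ordn (n a : nat) : 'I_n.+1 := Ordinal (ltn_pmod a (ltn0Sn n)).
Lemma ordnE n (a : 'I_n.+1) : ordn n a = a.
Proof. by apply: val_inj; rewrite /= modn_small.
Qed.
Definition ycond (i : 'I_4) (a b : 'I_16) : bool := (~~ bitI b i) && (a == b + 2 ^ i :> nat).

Lemma yv_check : all (fun i => all (fun a => all (fun b =>
  ((ycond (ordn 3 i) (ordn 15 a) (ordn 15 b) ==
      (isub (toidx b) (toidx a) && ieq (idif (toidx a) (toidx b)) (yidx i))) &&
  (ycond (ordn 3 i) (ordn 15 a) (ordn 15 b) ==>
      (odd (count (fun j => bitI b j) (iota 0 i)) == isgn (idif (toidx a) (toidx b)) (toidx b)))))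
  (iota 0 16)) (iota 0 16)) (iota 0 4).
Proof. by vm_compute. Qed.

Lemma xv_check : all (fun a => all (fun b =>
  ((a == b) == (isub (toidx b) (toidx a) && ieq (idif (toidx a) (toidx b)) (false,false,false,false))) &&
  ((a == b) ==> ~~ isgn (idif (toidx a) (toidx b)) (toidx b))) (iota 0 16)) (iota 0 16).
Proof. by vm_compute. Qed.

Section Main.
Variable K : fieldType.

Lemma yvE (i : 'I_4) : yv K i = Phi (vl (oY (KX K) (yidx i))).
Proof.
apply/matrixP => a b; rewrite !mxE /gent /vl /oY.
have Hi : (i : nat) \in iota 0 4 by rewrite mem_iota ltn_ord.
have Ha : (a : nat) \in iota 0 16 by rewrite mem_iota ltn_ord.
have Hb : (b : nat) \in iota 0 16 by rewrite mem_iota ltn_ord.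
move: yv_check => /allP/(_ _ Hi)/allP/(_ _ Ha)/allP/(_ _ Hb)/andP [/eqP E1 /implyP E2].
rewrite !ordnE in E1 E2.
rewrite /ycond in E1 E2; rewrite E1 in E2; rewrite E1; move: E2.
move: (isub _ _) (ieq _ _) (isgn _ _) => s q g.
case: s; case: q => /= H; [| by case: (g); rewrite ?oppr0 | by [] | by []].
move/(_ isT)/eqP: H => <-.
by rewrite -signr_odd; case: odd; rewrite ?expr1 ?expr0.
Qed.

Lemma PhiC (R : comNzRingType) (c : R) : Phi (vl (oC c)) = c%:M.
Proof.
apply/matrixP => a b; rewrite !mxE /gent /vl /oC.
have Ha : (a : nat) \in iota 0 16 by rewrite mem_iota ltn_ord.
have Hb : (b : nat) \in iota 0 16 by rewrite mem_iota ltn_ord.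
move: xv_check => /allP/(_ _ Ha)/allP/(_ _ Hb)/andP [/eqP E1 /implyP E2].
rewrite E1 in E2; rewrite [a == b]E1; move: E2.
move: (isub _ _) (ieq _ _) (isgn _ _) => s q g.
case: s; case: q => /= H; [| by case: (g); rewrite ?oppr0 | by [] | by []].
by move/(_ isT): H => /negbTE ->.
Qed.

Definition XX (k : nat) : KX K := 'X_(inord k).
Definition cqK b := cq (XX 0) (XX 1) (XX 2) (XX 3) b.
Definition BqK t := Bq (XX 0) (XX 1) (XX 2) (XX 3) t.
Definition dlK j := dl (XX 0) (XX 1) (XX 2) (XX 3) j.

Lemma CgenE b : Cgen K b = Psi (cqK b).
Proof.
apply/matrixP => p q; rewrite !mxE /cqK /cq.
case: b; case: p q => [[|[|p]] Hp] [[|[|q]] Hq] //=; rewrite /xv ?yvE ?PhiC //;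
  by rewrite /yidx inordK.
Qed.
End Main.

Lemma commM (R : ringType) (X A B : R) : X * A = A * X -> X * B = B * X -> X * (A * B) = (A * B) * X.
Proof. by move=> HA HB; rewrite mulrA HA -mulrA HB mulrA. Qed.
Lemma commB (R : ringType) (X A B : R) : X * A = A * X -> X * B = B * X ->
  X * (A * B - B * A) = (A * B - B * A) * X.
Proof. by move=> HA HB; rewrite mulrBr mulrBl (commM HA HB) (commM HB HA). Qed.
Lemma commX (R : ringType) (X A : R) n : X * A = A * X -> X * A ^+ n = A ^+ n * X.
Proof.
move=> HA; elim: n => [|n IH]; first by rewrite !expr0 mul1r mulr1.
by rewrite exprS commM.
Qed.

Lemma pair_abs (T : ringType) (s1 s2 A B C : T) : (forall X, s1 * X = X * s1) -> (forall X, s2 * X = X * s2) ->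
  A * B * C - C * (A * B) = 0 -> s1 * A * (s2 * B) * C = C * (s1 * A * (s2 * B)).
Proof.
move=> H1 H2 /eqP; rewrite subr_eq0 => /eqP H.
have E : s1 * A * (s2 * B) = s1 * (s2 * (A * B)).
  by rewrite -mulrA [A * (s2 * B)]mulrA -(H2 A) -mulrA.
rewrite E; move: (A * B) H => P H.
transitivity (s1 * (s2 * (C * P))); first by rewrite -!mulrA H.
by rewrite (mulrA C s1) -(H1 C) -mulrA (mulrA C s2) -(H2 C) -mulrA.
Qed.

Lemma triple_abs (T : ringType) (s1 s2 s3 A B C : T) : (forall X, s1 * X = X * s1) ->
  (forall X, s2 * X = X * s2) -> C * A * B = 0 -> s3 * C * (s1 * A * (s2 * B)) = 0.
Proof.
move=> H1 H2 H.
have E : s1 * A * (s2 * B) = s1 * (s2 * (A * B)).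
  by rewrite -mulrA [A * (s2 * B)]mulrA -(H2 A) -mulrA.
rewrite E -mulrA (mulrA C s1) -(H1 C) -mulrA (mulrA C s2) -(H2 C) -mulrA (mulrA C A B) H.
by rewrite !mulr0.
Qed.


Definition qone (R : comNzRingType) : quad R :=
  Quad (oC (1 : R)) (fun _ => None) (fun _ => None) (oC (1 : R)).
Definition qpow (R : comNzRingType) (A : quad R) (n : nat) : quad R :=
  iter n (fun P => oqmul P A) (qone R).

Lemma Phi0 (R : comNzRingType) : Phi (vl (fun _ : idx => None : option R)) = 0.
Proof. by apply/matrixP => a b; rewrite !mxE /gent /vl /= oppr0 !if_same. Qed.

Lemma Psi_one (R : comNzRingType) : Psi (qone R) = 1.
Proof.
apply/matrixP => i j; rewrite !mxE.
case: i j => [[|[|i]] Hi] [[|[|j]] Hj] //=; rewrite ?PhiC ?Phi0 //.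
Qed.

Lemma Psi_qpow (R : comNzRingType) (A : quad R) n : Psi (qpow A n) = Psi A ^+ n.
Proof.
elim: n => [|n IH]; first by rewrite expr0 Psi_one.
by rewrite exprSr -IH PsiM.
Qed.

Definition lowb (x : idx) : bool := let '(a,b,c,d) := x in (a + b + c + d <= 1)%N.
Definition entrel (R S : comNzRingType) (f : R -> S) (A : quad R) (B : quad S) (x : idx) : Prop :=
  f (val (q00 A x)) = val (q00 B x) /\ f (val (q01 A x)) = val (q01 B x) /\
  f (val (q10 A x)) = val (q10 B x) /\ f (val (q11 A x)) = val (q11 B x).
Definition qlow (R S : comNzRingType) (f : R -> S) (A : quad R) (B : quad S) : Prop :=
  forall x, lowb x -> entrel f A B x.

Lemma gmul_low (R S : comNzRingType) (f : {rmorphism R -> S}) (u v : GG R) (u' v' : GG S) :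
  (forall x, lowb x -> f (u x) = u' x) -> (forall x, lowb x -> f (v x) = v' x) ->
  forall x, lowb x -> f (gmul u v x) = gmul u' v' x.
Proof.
move=> Hu Hv [[[[] []] []] []] Hx; move: Hx; rewrite /lowb /= => // _;
lazy beta iota zeta delta [gmul gsum gterm allidx isub idif isgn foldr implb andb negb xorb];
rewrite ?(rmorphD, rmorphM, rmorphN, rmorph0) ?Hu ?Hv //.
Qed.

Lemma vog (R : comNzRingType) (u v u' v' : OG R) x :
  val (oadd (ogmul u v x) (ogmul u' v' x)) = gmul (vl u) (vl v) x + gmul (vl u') (vl v') x.
Proof. by rewrite val_oadd !ogmulE. Qed.

Lemma qlow_mul (R S : comNzRingType) (f : {rmorphism R -> S}) A A' B B' :
  qlow f A A' -> qlow f B B' -> qlow f (oqmul A B) (oqmul A' B').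
Proof.
move=> HA HB x lx; rewrite /entrel /oqmul; cbn beta iota delta [q00 q01 q10 q11]; rewrite !vog.
split; [|split; [|split]]; rewrite rmorphD; congr (_ + _); apply: gmul_low => // y ly; rewrite /vl;
  first [ by case: (HA y ly) => [? [? [? ?]]] | by case: (HB y ly) => [? [? [? ?]]] ].
Qed.

Lemma val_oneg (R : comNzRingType) (a : option R) : val (oneg a) = - val a.
Proof. by case: a => //=; rewrite oppr0. Qed.

Lemma qlow_add (R S : comNzRingType) (f : {rmorphism R -> S}) A A' B B' :
  qlow f A A' -> qlow f B B' -> qlow f (oqadd A B) (oqadd A' B').
Proof.
move=> HA HB x lx; rewrite /entrel /oqadd; cbn beta iota delta [q00 q01 q10 q11]; rewrite !val_oadd !rmorphD.
by case: (HA x lx) => [-> [-> [-> ->]]]; case: (HB x lx) => [-> [-> [-> ->]]].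
Qed.

Lemma qlow_opp (R S : comNzRingType) (f : {rmorphism R -> S}) A A' :
  qlow f A A' -> qlow f (oqopp A) (oqopp A').
Proof.
move=> HA x lx; rewrite /entrel /oqopp; cbn beta iota delta [q00 q01 q10 q11]; rewrite !val_oneg !rmorphN.
by case: (HA x lx) => [-> [-> [-> ->]]].
Qed.

Lemma qlow_comm (R S : comNzRingType) (f : {rmorphism R -> S}) A A' B B' :
  qlow f A A' -> qlow f B B' -> qlow f (oqcomm A B) (oqcomm A' B').
Proof.
move=> HA HB; apply: qlow_add; [exact: qlow_mul | apply: qlow_opp; exact: qlow_mul].
Qed.

Lemma qlow_trans (R S : comNzRingType) (f : R -> S) A B C :
  qlow f A B -> (forall x, lowb x -> entrel id B C x) -> qlow f A C.
Proof.
move=> HAB HBC x lx; rewrite /entrel; case: (HAB x lx) => [-> [-> [-> ->]]]; exact: (HBC x lx).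
Qed.

Lemma nz1 (K : fieldType) (v : K) : v * v = 1 -> v != 0.
Proof. by move=> H; apply/eqP => v0; move: H; rewrite v0 mul0r => /eqP; rewrite eq_sym oner_eq0. Qed.

Ltac lcompute := lazy beta iota zeta delta [oT oC oY qzero qone cq dl Bq oqeqv oqcomm oqadd oqopp oqmul oqscal
  q00 q01 q10 q11 ogmul oadd omul oneg osg val allidx isub idif isgn ieq foldr implb andb negb xorb Bool.eqb].

Section KW.
Variable K : fieldType.
Definition cK b : quad K := cq (1 : K) 1 0 0 b.
Definition BK t : quad K := Bq (1 : K) 1 0 0 t.
Definition rep n (A : quad K) := if n is 0 then qone K else A.
Definition Fk n m (G : quad K) := oqmul (oqmul (rep n (cK false)) (rep m (cK true))) G.
Definition Y1 : idx := (true,false,false,false).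

Lemma nz_one n m : (n + m != 0)%N ->
  val (q01 (oqcomm (Fk n m (qone K)) (cK ((n != 0) && (m == 0))%N)) Y1) != 0.
Proof.
case: n => [|n]; case: m => [|m] //= _; apply: nz1;
  rewrite /Fk /rep /cK /Y1; lcompute; ring.
Qed.

Lemma nz_B n m t : val (q01 (oqcomm (Fk n m (BK t)) (cK false)) Y1) != 0.
Proof.
case: n => [|n]; case: m => [|m]; case: t => [[[] []]|]; apply: nz1;
  rewrite /Fk /rep /cK /BK /Y1; lcompute; ring.
Qed.

Lemma rep_step n b x : lowb x -> entrel id (oqmul (rep n (cK b)) (cK b)) (cK b) x.
Proof.
case: x => [[[[] []] []] []]; rewrite /lowb //= => _; case: n => [|n]; case: b;
  rewrite /rep /cK /entrel; lcompute; (repeat split); ring.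
Qed.
End KW.

Section Logic.
Variable K : fieldType.
Local Notation M2 := ('M[SA K]_2).

Lemma sc1 : sc (1 : KX K) = 1.
Proof. by []. Qed.

Lemma lcomm_nil : lcomm K [::] = C1 K * C2 K - C2 K * C1 K.
Proof. by []. Qed.
Lemma lcomm_rcons js j : lcomm K (rcons js j) = lcomm K js * Cgen K j - Cgen K j * lcomm K js.
Proof. by rewrite /lcomm foldl_rcons. Qed.

Lemma scalE (c : K) : scal c = sc (c%:MP : KX K).
Proof. by []. Qed.

Opaque Psi sc Cgen lcomm GRing.mul GRing.add GRing.opp.

Definition vK : 'I_4 -> K := fun i => if (i < 2)%N then 1 else 0.
Definition ev (p : KX K) : K := meval vK p.
Lemma evXX k : (k < 4)%N -> ev (XX K k) = if (k < 2)%N then 1 else 0.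
Proof. by move=> hk; rewrite /ev /XX mevalXU /vK inordK. Qed.
Lemma ev_dl j : ev (dlK K j) = 1.
Proof. by case: j; rewrite /dlK /dl /ev mevalB -!/(ev _) !evXX //= subr0. Qed.

Lemma lcomm_shape js : exists c t, lcomm K js = sc c * Psi (BqK K t) /\ ev c = 1.
Proof.
elim/last_ind: js => [|js j [c [t [IH Hc]]]].
  exists 1, None; split; last by rewrite /ev meval1.
  rewrite sc1 mul1r lcomm_nil /C1 /C2 !CgenE PsiC; apply: oqeqv_Psi; exact: chk1.
rewrite lcomm_rcons IH CgenE; clear IH.
have -> : Psi (cqK K j) * (sc c * Psi (BqK K t)) = sc c * (Psi (cqK K j) * Psi (BqK K t)).
  rewrite mulrA -(sc_comm c (Psi (cqK K j))) -mulrA; reflexivity.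
rewrite -mulrA -mulrBr PsiC.
case: t => [[e j']|].
- rewrite (oqeqv_Psi (chk3 (XX K 0) (XX K 1) (XX K 2) (XX K 3) e j' j)) -PsiZ mulrA sc_mul.
  exists (c * dlK K j'), (Some (~~ e, j)); split; first reflexivity.
  by rewrite /ev mevalM -!/(ev _) Hc ev_dl mulr1.
- rewrite (oqeqv_Psi (chk2 (XX K 0) (XX K 1) (XX K 2) (XX K 3) j)).
  by exists c, (Some (false, j)); split; first reflexivity.
Qed.


Lemma pair_comm js js' b :
  (lcomm K js * lcomm K js') * Cgen K b = Cgen K b * (lcomm K js * lcomm K js').
Proof.
have [c [t [-> _]]] := lcomm_shape js; have [d [t' [-> _]]] := lcomm_shape js'.
apply: (pair_abs (sc_comm c) (sc_comm d)).
rewrite (CgenE K b) (PsiM (BqK K t) (BqK K t')) (PsiC (oqmul (BqK K t) (BqK K t')) (cqK K b)).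
rewrite (oqeqv_Psi (chk4 (XX K 0) (XX K 1) (XX K 2) (XX K 3) t t' b)).
exact: Psi0.
Qed.

Lemma triple_zero js js' js'' : lcomm K js'' * (lcomm K js * lcomm K js') = 0.
Proof.
have [c [t [-> _]]] := lcomm_shape js; have [d [t' [-> _]]] := lcomm_shape js'.
have [e [t'' [-> _]]] := lcomm_shape js''.
apply: (@triple_abs _ (sc c) (sc d) (sc e) (Psi (BqK K t)) (Psi (BqK K t')) (Psi (BqK K t'')) (sc_comm c) (sc_comm d)).
rewrite (PsiM (BqK K t'') (BqK K t)) (PsiM (oqmul (BqK K t'') (BqK K t)) (BqK K t')).
rewrite (oqeqv_Psi (chk5 (XX K 0) (XX K 1) (XX K 2) (XX K 3) t'' t t')).
exact: Psi0.
Qed.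

Definition comm_all (X : M2) := forall b, X * Cgen K b = Cgen K b * X.
Definition isComm (X : M2) := exists js, X = lcomm K js.
Definition Z2 (X : M2) := comm_all X /\ forall js, lcomm K js * X = 0.

Lemma comm_all_lcomm X : comm_all X -> forall js, X * lcomm K js = lcomm K js * X.
Proof.
move=> HX; elim/last_ind => [|js j IH].
  rewrite lcomm_nil; apply: commB; exact: HX.
rewrite lcomm_rcons; apply: commB; [exact: IH | exact: HX].
Qed.

Lemma Z2_r X js : Z2 X -> X * lcomm K js = 0.
Proof. move=> [HX H0]; rewrite (comm_all_lcomm HX); exact: H0. Qed.
Lemma Z2_0 : Z2 0.
Proof. split => [b|js]; rewrite ?mul0r ?mulr0; reflexivity. Qed.
Lemma Z2_mul X Y : Z2 X -> Z2 Y -> Z2 (X * Y).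
Proof.
move=> [HX0 HX1] [HY0 HY1]; split => [b|js].
  rewrite -mulrA HY0 mulrA HX0 mulrA; reflexivity.
rewrite mulrA HX1 mul0r; reflexivity.
Qed.
Lemma Z2_pair js js' : Z2 (lcomm K js * lcomm K js').
Proof. split => [b|js'']; [exact: pair_comm | exact: triple_zero]. Qed.

Definition lev (l : nat) (X : M2) : Prop :=
  match l with 0 => X = 1 | 1 => isComm X | _ => Z2 X end.

Lemma lev_mul l1 l2 X Y : lev l1 X -> lev l2 Y -> lev (l1 + l2) (X * Y).
Proof.
case: l1 => [|[|l1]] HX; case: l2 => [|[|l2]] HY.
- change (X * Y = 1); move: HX HY => /= -> ->; rewrite mulr1; reflexivity.
- change (isComm (X * Y)); move: HX => /= ->; rewrite mul1r; exact: HY.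
- change (Z2 (X * Y)); move: HX => /= ->; rewrite mul1r; exact: HY.
- change (isComm (X * Y)); move: HY => /= ->; rewrite mulr1; exact: HX.
- change (Z2 (X * Y)); case: HX => js ->; case: HY => js' ->; exact: Z2_pair.
- change (Z2 (X * Y)); case: HX => js ->; case: HY => _ H0; rewrite H0; exact: Z2_0.
- change (Z2 (X * Y)); move: HY => /= ->; rewrite mulr1; exact: HX.
- change (Z2 (X * Y)); case: HY => js ->; rewrite (Z2_r js HX); exact: Z2_0.
- change (Z2 (X * Y)); exact: Z2_mul.
Qed.

Lemma lev_pow u k : isComm u -> lev k (u ^+ k).
Proof.
move=> Hu; elim: k => [|k IH]; first by rewrite expr0.
rewrite exprS; exact: (@lev_mul 1).
Qed.

Lemma lev_prod (us : seq (seq bool * nat)) :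
  lev (\sum_(p <- us) p.2) (\prod_(p <- us) lcomm K p.1 ^+ p.2).
Proof.
elim: us => [|p us IH]; first by rewrite !big_nil.
rewrite !big_cons; apply: lev_mul => //; apply: lev_pow; by exists p.1.
Qed.

Lemma commX_all X : comm_all X -> forall n m, X * (C1 K ^+ n * C2 K ^+ m) = (C1 K ^+ n * C2 K ^+ m) * X.
Proof. by move=> HX n m; apply: commM; apply: commX; apply: HX. Qed.

Lemma KP_pow X (A : M2) n : Z2 X -> X * A = A * X ->
  (forall b, (A * Cgen K b - Cgen K b * A) * X = 0) ->
  forall b, (A ^+ n * Cgen K b - Cgen K b * A ^+ n) * X = 0.
Proof.
move=> HZ HA HK; elim: n => [|n IH] b.
  by rewrite expr0 mul1r mulr1 subrr mul0r.
have -> : A ^+ n.+1 * Cgen K b - Cgen K b * A ^+ n.+1 =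
          A * (A ^+ n * Cgen K b - Cgen K b * A ^+ n) + (A * Cgen K b - Cgen K b * A) * A ^+ n.
  by rewrite exprS mulrBr mulrBl !mulrA addrA subrK.
rewrite mulrDl -mulrA IH mulr0 add0r -mulrA -(commX n HA) mulrA HK mul0r; reflexivity.
Qed.
End Logic.
Opaque Psi sc Cgen lcomm.

Lemma KPmul_abs (T : ringType) (X A B C : T) : X * B = B * X ->
  (A * C - C * A) * X = 0 -> (B * C - C * B) * X = 0 -> (A * B * C - C * (A * B)) * X = 0.
Proof.
move=> HXB HA HB.
have -> : A * B * C - C * (A * B) = A * (B * C - C * B) + (A * C - C * A) * B.
  by rewrite mulrBr mulrBl !mulrA addrA subrK.
rewrite mulrDl -mulrA HB mulr0 add0r -mulrA -HXB mulrA HA mul0r; reflexivity.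
Qed.

Lemma fin_abs (T : ringType) (W X C : T) : X * C = C * X -> (W * C - C * W) * X = 0 ->
  W * X * C = C * (W * X).
Proof.
move=> HXC /eqP; rewrite mulrBl subr_eq0 => /eqP H.
by rewrite -mulrA HXC mulrA H mulrA.
Qed.

Lemma cen_abs (T : ringType) (f s P : T) : (forall Y, s * Y = Y * s) -> f * P = P * f ->
  f * (s * P) = s * P * f.
Proof. by move=> Hs H; rewrite mulrA -Hs -mulrA H mulrA. Qed.

Lemma scal_abs (T : ringType) (s A B C : T) : (forall Y, s * Y = Y * s) ->
  A * B * (s * C) = s * (A * B * C).
Proof. by move=> Hs; rewrite mulrA -(Hs (A * B)) -mulrA. Qed.

Lemma comm0_abs (T : ringType) (s F C : T) : (forall Y, s * Y = Y * s) ->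
  s * F * C = C * (s * F) -> s * (F * C - C * F) = 0.
Proof.
move=> Hs H; rewrite mulrBr mulrA H mulrA -(Hs C) -mulrA; apply/eqP; rewrite subr_eq0; apply/eqP.
reflexivity.
Qed.

Section Final.
Variable K : fieldType.
Local Notation M2 := ('M[SA K]_2).

Lemma KP_C X a : Z2 X -> forall b, (Cgen K a * Cgen K b - Cgen K b * Cgen K a) * X = 0.
Proof.
move=> [HX0 HX1] b; have := HX1 [::]; rewrite lcomm_nil => H; clear HX0 HX1.
case: a; case: b.
- rewrite subrr mul0r; reflexivity.
- rewrite -opprB mulNr H oppr0; reflexivity.
- exact: H.
- rewrite subrr mul0r; reflexivity.
Qed.

Lemma lev_ge2 l (X : M2) : (2 <= l)%N -> lev l X -> Z2 X.
Proof. by case: l => [|[|l]]. Qed.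

Lemma if_dir_Z n m (X : M2) : Z2 X -> comm_all (C1 K ^+ n * C2 K ^+ m * X).
Proof.
move=> HZ; case: (HZ) => HX0 HX1 b.
apply: fin_abs; first exact: HX0.
apply: KPmul_abs.
- apply: commX; exact: HX0.
- apply: (KP_pow (A := C1 K)) => //; [exact: HX0 | move=> b'; exact: KP_C].
- apply: (KP_pow (A := C2 K)) => //; [exact: HX0 | move=> b'; exact: KP_C].
Qed.

Lemma if_dir n m (us : seq (seq bool * nat)) : (2 <= \sum_(p <- us) p.2)%N ->
  comm_all (C1 K ^+ n * C2 K ^+ m * \prod_(p <- us) lcomm K p.1 ^+ p.2).
Proof. move=> Hs; apply: if_dir_Z; exact: (lev_ge2 Hs (lev_prod K us)). Qed.

Lemma prodC_comm (f : M2) (l : seq bool) : comm_all f ->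
  f * \prod_(b <- l) Cgen K b = (\prod_(b <- l) Cgen K b) * f.
Proof.
move=> Hf; elim: l => [|b l IH]; first by rewrite big_nil mulr1 mul1r.
rewrite big_cons; apply: commM; [exact: Hf | exact: IH].
Qed.

Lemma central_of (f : M2) : comm_all f -> centralF f.
Proof.
move=> Hf g [s ->]; rewrite mulr_sumr mulr_suml; apply: eq_bigr => p _.
rewrite scalE; apply: cen_abs; [exact: sc_comm | exact: prodC_comm].
Qed.

Lemma comm_all_of (f : M2) : centralF f -> comm_all f.
Proof.
move=> Hf b; apply: Hf; exists [:: (1, [:: b])].
rewrite big_cons big_nil addr0 /= big_cons big_nil mulr1 scalE mpolyC1 sc1 mul1r.
reflexivity.
Qed.

Lemma mevXX k : (k < 4)%N -> meval (@vK K) (XX K k) = if (k < 2)%N then 1 else 0.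
Proof. exact: evXX. Qed.
Lemma meval_nat k : meval (@vK K) k%:R = k%:R.
Proof. exact: rmorph_nat. Qed.

Lemma qlow_cq b : qlow (meval (@vK K)) (cqK K b) (cK K b).
Proof.
case: b => -[[[[] []] []] []]; rewrite /lowb //= => _; rewrite /entrel /cqK /cK;
  lcompute; rewrite ?mevXX ?meval0 ?meval1 //.
Qed.

Lemma qlow_one : qlow (meval (@vK K)) (qone _) (qone K).
Proof.
case=> [[[[] []] []] []]; rewrite /lowb //= => _; rewrite /entrel;
  lcompute; rewrite ?meval0 ?meval1 //.
Qed.

Lemma qpow_low b n : qlow (meval (@vK K)) (qpow (cqK K b) n) (rep n (cK K b)).
Proof.
elim: n => [|n IH]; first exact: qlow_one.
apply: qlow_trans; last exact: rep_step.
exact: (qlow_mul IH (qlow_cq b)).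
Qed.

Lemma qlow_Bq t : qlow (meval (@vK K)) (BqK K t) (BK K t).
Proof.
case: t => [[[] []]|] [[[[] []] []] []]; rewrite /lowb //= => _; rewrite /entrel /BqK /BK;
  lcompute; rewrite ?(mevalD, mevalB, mevalM, mevalN, meval0, meval1, meval_nat) ?mevXX //=; ring.
Qed.

Lemma nc_core n m (c : KX K) (Gq : quad (KX K)) (Gk : quad K) k :
  ev c = 1 -> qlow (meval (@vK K)) Gq Gk ->
  val (q01 (oqcomm (Fk n m Gk) (cK K k)) Y1) != 0 ->
  ~ comm_all (C1 K ^+ n * C2 K ^+ m * (sc c * Psi Gq)).
Proof.
move=> Hc HG Hnz Hca.
pose Fq := oqmul (oqmul (qpow (cqK K false) n) (qpow (cqK K true) m)) Gq.
have E : C1 K ^+ n * C2 K ^+ m * (sc c * Psi Gq) = sc c * Psi Fq.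
  rewrite (@scal_abs _ (sc c) (C1 K ^+ n) (C2 K ^+ m) (Psi Gq) (sc_comm c)) /C1 /C2 !CgenE.
  rewrite -!Psi_qpow !PsiM; reflexivity.
have H := Hca k; rewrite E (CgenE K k) in H.
have H2 := comm0_abs (sc_comm c) H.
have H3 : Psi (oqscal c (oqcomm Fq (cqK K k))) = Psi (qzero (KX K)).
  rewrite /qzero Psi0 -PsiZ -PsiC; exact: H2.
have H4 := Psi_inj01 H3 Y1.
move: H4; cbn beta iota delta [oqscal qzero q01]; rewrite val_omul => H4.
have H5 := congr1 (meval (@vK K)) H4.
have Hc' : meval (@vK K) c = 1 := Hc.
rewrite mevalM /= Hc' mul1r meval0 in H5.
have L : qlow (meval (@vK K)) (oqcomm Fq (cqK K k)) (oqcomm (Fk n m Gk) (cK K k)).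
  apply: qlow_comm; last exact: qlow_cq.
  apply: qlow_mul; last exact: HG.
  apply: qlow_mul; exact: qpow_low.
case: (L Y1 isT) => _ [H6 _]; rewrite H6 in H5.
by rewrite H5 eqxx in Hnz.
Qed.

End Final.

Lemma sum0_all (us : seq (seq bool * nat)) : (\sum_(p <- us) p.2 = 0)%N -> all (fun p => p.2 == 0)%N us.
Proof.
elim: us => [|p us IH] //; rewrite big_cons => /eqP; rewrite addn_eq0 => /andP [H1 H2].
by rewrite /= H1 IH //; apply/eqP.
Qed.

Lemma prod_all1 (K : fieldType) (us : seq (seq bool * nat)) : all (fun p => p.2 == 0)%N us ->
  \prod_(p <- us) lcomm K p.1 ^+ p.2 = 1.
Proof.
elim: us => [|p us IH]; first by rewrite big_nil.
rewrite big_cons /= => /andP [/eqP -> H]; rewrite expr0 mul1r; exact: IH.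
Qed.

Theorem proposition2 (K : fieldType)
  (K_infinite : forall s : seq K, exists x : K, x \notin s)
  (K_char : (2%:R : K) != 0)
  (n m : nat) (us : seq (seq bool * nat)) :
  centralF (C1 K ^+ n * C2 K ^+ m * \prod_(p <- us) lcomm K p.1 ^+ p.2)
  <-> ((2 <= \sum_(p <- us) p.2)%N
       \/ (n = 0%N /\ m = 0%N /\ all (fun p => p.2 == 0%N) us)).
Proof.
split.
- move=> Hc; have Hca := comm_all_of Hc.
  case: (leqP 2 (\sum_(p <- us) p.2)) => [Hs|Hs]; first by left.
  have L := lev_prod K us.
  have [H0|H1] : (\sum_(p <- us) p.2 = 0)%N \/ (\sum_(p <- us) p.2 = 1)%N by lia.
  + rewrite H0 in L; right.
    have Hnm : (n + m == 0)%N.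
      apply/negPn/negP => Hnm.
      apply: (@nc_core K n m 1 (qone _) (qone K) ((n != 0) && (m == 0))%N).
      * by rewrite /ev meval1.
      * exact: qlow_one.
      * exact: nz_one.
      have E1 : sc 1 * Psi (qone (KX K)) = \prod_(p <- us) lcomm K p.1 ^+ p.2.
        by rewrite sc1 Psi_one mul1r L.
      rewrite E1; exact: Hca.
    split; first lia. split; first lia.
    exact: sum0_all.
  + exfalso; rewrite H1 in L; case: L => js Ejs.
    have [c [t [Ec Hc1]]] := lcomm_shape K js.
    apply: (@nc_core K n m c (BqK K t) (BK K t) false Hc1).
    * exact: qlow_Bq.
    * exact: nz_B.
    rewrite -Ec -Ejs; exact: Hca.
- case => [Hs | [En [Em Hall]]].
  + apply: central_of; exact: if_dir.
  + apply: central_of; rewrite En Em (prod_all1 K Hall) !expr0 !mul1r => b.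
    rewrite mul1r mulr1; reflexivity.
Qed.
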